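(* Let $\mathcal B$ be a bicategory (a skew bicategory whose constraints $\alpha,\lambda,\rho$ are all invertible). Suppose given data $(D,T,K,v,k,v_0)$ on $\mathcal B$ as in the definition of a skew warping below, with all components of $v$, $k$ and $v_0$ invertible, satisfying axioms (W1) and (W2). Then axioms (W3), (W4) and (W5) also hold; that is, the data is a warping on $\mathcal B$.
   Context: Notation: for 1-cells $f\colon X\to Y$, $g\colon Y\to Z$ write $g\cdot f\colon X\to Z$ for their composite, $1$ or $1_X$ for identity 1-cells, and $\theta\cdot f$, $g\cdot\theta$ for whiskerings of 2-cells. A skew bicategory $\mathcal B$ consists of objects; hom-categories $\mathcal B(X,Y)$; composition functors $\mathcal B(Y,Z)\times\mathcal B(X,Y)\to\mathcal B(X,Z)$; identity 1-cells $1_X$; and natural (not necessarily invertible) 2-cells $\alpha_{f,g,h}\colon (h\cdot g)\cdot f\to h\cdot(g\cdot f)$, $\lambda_f\colon 1\cdot f\to f$, $\rho_f\colon f\to f\cdot 1$, subject to: (B1) $(k\cdot\alpha_{f,g,h})\circ\alpha_{f,h\cdot g,k}\circ(\alpha_{g,h,k}\cdot f)=\alpha_{g\cdot f,h,k}\circ\alpha_{f,g,k\cdot h}$; (B2) $(g\cdot\lambda_f)\circ\alpha_{f,1,g}\circ(\rho_g\cdot f)=1_{g\cdot f}$; (B3) $\lambda_{g\cdot f}\circ\alpha_{f,g,1}=\lambda_g\cdot f$; (B4) $\alpha_{1,f,g}\circ\rho_{g\cdot f}=g\cdot\rho_f$; (B5) $\lambda_1\circ\rho_1=1_{1}$. A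 skew warping on a skew bicategory $\mathcal B$ consists of: a function $D$ on objects; functors $T\colon\mathcal B(X,DY)\to\mathcal B(DX,DY)$; 1-cells $K=K_X\colon X\to DX$; natural 2-cells $v=v_{g,f}\colon T(Tg\cdot f)\to Tg\cdot Tf$ (for $f\colon X\to DY$, $g\colon Y\to DZ$), $k=k_f\colon f\to Tf\cdot K_X$ (for $f\colon X\to DY$), and 2-cells $v_0=v_{0,Y}\colon TK_Y\to 1_{DY}$, subject to the following axioms, for all $f\colon X\to DY$, $g\colon Y\to DZ$, $h\colon Z\to DW$: (W1) $\alpha\circ(v_{h,g}\cdot Tf)\circ v_{Th\cdot g,f}=(Th\cdot v_{g,f})\circ v_{h,Tg\cdot f}\circ T(\alpha)\circ T(v_{h,g}\cdot f)$ as 2-cells $T(T(Th\cdot g)\cdot f)\to Th\cdot(Tg\cdot Tf)$; (W2) $(Tf\cdot v_{0,X})\circ v_{f,K_X}\circ T(k_f)=\rho_{Tf}\colon Tf\to Tf\cdot 1$; (W3) $\lambda_{Tf}\circ(v_{0,Y}\cdot Tf)\circ v_{K_Y,f}=T(\lambda_f)\circ T(v_{0,Y}\cdot f)\colon T(TK_Y\cdot f)\to Tf$; (W4) $\alpha\circ(v_{g,f}\cdot K_X)\circ k_{Tg\cdot f}=Tg\cdot k_f\colon Tg\cdot f\to Tg\cdot(Tf\cdot K_X)$; (W5) $\lambda_{K_X}\circ(v_{0,X}\cdot K_X)\circ k_{K_X}=1_{K_X}$. A warping on a bicategory is a skew warping for which $v$, $k$, $v_0$ are invertible. *)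

(* Defs.v *)
Set Implicit Arguments.
Unset Strict Implicit.

Unset Implicit Arguments.
Record SkewBicatData := {
  ob : Type;
  hom : ob -> ob -> Type;
  cell : forall X Y : ob, hom X Y -> hom X Y -> Type;
  id2 : forall X Y (f : hom X Y), cell X Y f f;
  vcomp : forall X Y (f g h : hom X Y), cell X Y g h -> cell X Y f g -> cell X Y f h;
  comp1 : forall X Y Z, hom Y Z -> hom X Y -> hom X Z;
  hcomp : forall X Y Z (g g' : hom Y Z) (f f' : hom X Y),
      cell Y Z g g' -> cell X Y f f' -> cell X Z (comp1 X Y Z g f) (comp1 X Y Z g' f');
  id1 : forall X, hom X X;
  alpha : forall W X Y Z (f : hom W X) (g : hom X Y) (h : hom Y Z),
      cell W Z (comp1 W X Z (comp1 X Y Z h g) f) (comp1 W Y Z h (comp1 W X Y g f));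
  lambda : forall X Y (f : hom X Y), cell X Y (comp1 X Y Y (id1 Y) f) f;
  rho : forall X Y (f : hom X Y), cell X Y f (comp1 X X Y f (id1 X))
}.

Set Implicit Arguments.
Arguments cell {s X Y} _ _.
Arguments id2 {s X Y} _.
Arguments vcomp {s X Y f g h} _ _.
Arguments comp1 {s X Y Z} _ _.
Arguments hcomp {s X Y Z g g' f f'} _ _.
Arguments id1 {s} _.
Arguments alpha {s W X Y Z} _ _ _.
Arguments lambda {s X Y} _.
Arguments rho {s X Y} _.

Declare Scope bicat_scope.
Delimit Scope bicat_scope with bc.
Open Scope bicat_scope.
Notation "g · f" := (comp1 g f) (at level 40, left associativity) : bicat_scope.
Notation "b ∘ a" := (vcomp b a) (at level 40, left associativity) : bicat_scope.
Notation "θ ⋆ φ" := (hcomp θ φ) (at level 35) : bicat_scope.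
Definition rwhisk {B : SkewBicatData} {X Y Z} {g g' : hom B Y Z}
  (θ : cell g g') (f : hom B X Y) : cell (g · f) (g' · f) := hcomp θ (id2 f).
Definition lwhisk {B : SkewBicatData} {X Y Z} (g : hom B Y Z) {f f' : hom B X Y}
  (θ : cell f f') : cell (g · f) (g · f') := hcomp (id2 g) θ.
Notation "θ ▹ f" := (rwhisk θ f) (at level 35) : bicat_scope.
Notation "g ◃ θ" := (lwhisk g θ) (at level 35) : bicat_scope.

Definition invertible {B : SkewBicatData} {X Y} {f g : hom B X Y} (c : cell f g) : Prop :=
  exists c' : cell g f, c' ∘ c = id2 f /\ c ∘ c' = id2 g.

Definition hom_categories (B : SkewBicatData) : Prop :=
  (forall X Y (f g : hom B X Y) (a : cell f g), id2 g ∘ a = a) /\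
  (forall X Y (f g : hom B X Y) (a : cell f g), a ∘ id2 f = a) /\
  (forall X Y (f g h i : hom B X Y) (a : cell f g) (b : cell g h) (c : cell h i),
      c ∘ (b ∘ a) = (c ∘ b) ∘ a).

Definition comp_functorial (B : SkewBicatData) : Prop :=
  (forall X Y Z (g : hom B Y Z) (f : hom B X Y), id2 g ⋆ id2 f = id2 (g · f)) /\
  (forall X Y Z (g g' g'' : hom B Y Z) (f f' f'' : hom B X Y)
     (t : cell g g') (t' : cell g' g'') (p : cell f f') (p' : cell f' f''),
      (t' ∘ t) ⋆ (p' ∘ p) = (t' ⋆ p') ∘ (t ⋆ p)).

Definition constraints_natural (B : SkewBicatData) : Prop :=
  (forall W X Y Z (f f' : hom B W X) (g g' : hom B X Y) (h h' : hom B Y Z)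
     (a : cell f f') (b : cell g g') (c : cell h h'),
      alpha f' g' h' ∘ ((c ⋆ b) ⋆ a) = (c ⋆ (b ⋆ a)) ∘ alpha f g h) /\
  (forall X Y (f f' : hom B X Y) (a : cell f f'),
      lambda f' ∘ (id2 (id1 Y) ⋆ a) = a ∘ lambda f) /\
  (forall X Y (f f' : hom B X Y) (a : cell f f'),
      rho f' ∘ a = (a ⋆ id2 (id1 X)) ∘ rho f).

Definition axB1 (B : SkewBicatData) : Prop :=
  forall V W X Y Z (f : hom B V W) (g : hom B W X) (h : hom B X Y) (k : hom B Y Z),
    (k ◃ alpha f g h) ∘ alpha f (h · g) k ∘ (alpha g h k ▹ f)
    = alpha (g · f) h k ∘ alpha f g (k · h).
Definition axB2 (B : SkewBicatData) : Prop :=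
  forall X Y Z (f : hom B X Y) (g : hom B Y Z),
    (g ◃ lambda f) ∘ alpha f (id1 Y) g ∘ (rho g ▹ f) = id2 (g · f).
Definition axB3 (B : SkewBicatData) : Prop :=
  forall X Y Z (f : hom B X Y) (g : hom B Y Z),
    lambda (g · f) ∘ alpha f g (id1 Z) = lambda g ▹ f.
Definition axB4 (B : SkewBicatData) : Prop :=
  forall X Y Z (f : hom B X Y) (g : hom B Y Z),
    alpha (id1 X) f g ∘ rho (g · f) = g ◃ rho f.
Definition axB5 (B : SkewBicatData) : Prop :=
  forall X : ob B, lambda (id1 X) ∘ rho (id1 X) = id2 (id1 X).

Definition is_skew_bicat (B : SkewBicatData) : Prop :=
  hom_categories B /\ comp_functorial B /\ constraints_natural B /\
  axB1 B /\ axB2 B /\ axB3 B /\ axB4 B /\ axB5 B.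

Definition is_bicat (B : SkewBicatData) : Prop :=
  is_skew_bicat B /\
  (forall W X Y Z (f : hom B W X) (g : hom B X Y) (h : hom B Y Z), invertible (alpha f g h)) /\
  (forall X Y (f : hom B X Y), invertible (lambda f)) /\
  (forall X Y (f : hom B X Y), invertible (rho f)).

Unset Implicit Arguments.
Record WarpData (B : SkewBicatData) := {
  D : ob B -> ob B;
  T : forall X Y, hom B X (D Y) -> hom B (D X) (D Y);
  T2 : forall X Y (f f' : hom B X (D Y)), cell f f' -> cell (T X Y f) (T X Y f');
  K : forall X, hom B X (D X);
  v : forall X Y Z (g : hom B Y (D Z)) (f : hom B X (D Y)),
      cell (T X Z (T Y Z g · f)) (T Y Z g · T X Y f);
  k : forall X Y (f : hom B X (D Y)), cell f (T X Y f · K X);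
  v0 : forall Y, cell (T Y Y (K Y)) (id1 (D Y))
}.

Set Implicit Arguments.
Arguments D {B} _ _.
Arguments T {B} _ {X Y} _.
Arguments T2 {B} _ {X Y f f'} _.
Arguments K {B} _ _.
Arguments v {B} _ {X Y Z} _ _.
Arguments k {B} _ {X Y} _.
Arguments v0 {B} _ _.

Section WarpAxioms.
Context {B : SkewBicatData} (W : WarpData B).
Local Notation T := (T W).
Local Notation T2 := (T2 W).
Local Notation K := (K W).
Local Notation v := (v W).
Local Notation k := (k W).
Local Notation v0 := (v0 W).
Local Notation D := (D W).

Definition T_functor : Prop :=
  (forall X Y (f : hom B X (D Y)), T2 (id2 f) = id2 (T f)) /\
  (forall X Y (f f' f'' : hom B X (D Y)) (a : cell f f') (b : cell f' f''),
      T2 (b ∘ a) = T2 b ∘ T2 a).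

Definition v_natural : Prop :=
  forall X Y Z (g g' : hom B Y (D Z)) (f f' : hom B X (D Y)) (b : cell g g') (a : cell f f'),
    v g' f' ∘ T2 (T2 b ⋆ a) = (T2 b ⋆ T2 a) ∘ v g f.
Definition k_natural : Prop :=
  forall X Y (f f' : hom B X (D Y)) (a : cell f f'),
    k f' ∘ a = (T2 a ⋆ id2 (K X)) ∘ k f.

Definition axW1 : Prop :=
  forall X Y Z V (f : hom B X (D Y)) (g : hom B Y (D Z)) (h : hom B Z (D V)),
    alpha (T f) (T g) (T h) ∘ (v h g ▹ T f) ∘ v (T h · g) f
    = (T h ◃ v g f) ∘ v h (T g · f) ∘ T2 (alpha f (T g) (T h)) ∘ T2 (v h g ▹ f).
Definition axW2 : Prop :=
  forall X Y (f : hom B X (D Y)),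
    (T f ◃ v0 X) ∘ v f (K X) ∘ T2 (k f) = rho (T f).
Definition axW3 : Prop :=
  forall X Y (f : hom B X (D Y)),
    lambda (T f) ∘ (v0 Y ▹ T f) ∘ v (K Y) f = T2 (lambda f) ∘ T2 (v0 Y ▹ f).
Definition axW4 : Prop :=
  forall X Y Z (f : hom B X (D Y)) (g : hom B Y (D Z)),
    alpha (K X) (T f) (T g) ∘ (v g f ▹ K X) ∘ k (T g · f) = T g ◃ k f.
Definition axW5 : Prop :=
  forall X, lambda (K X) ∘ (v0 X ▹ K X) ∘ k (K X) = id2 (K X).

Definition components_invertible : Prop :=
  (forall X Y Z (g : hom B Y (D Z)) (f : hom B X (D Y)), invertible (v g f)) /\
  (forall X Y (f : hom B X (D Y)), invertible (k f)) /\
  (forall Y, invertible (v0 Y)).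
End WarpAxioms.

(* Main.v *)
Require Import Defs.
From Corelib Require Import ssreflect.

Section Main.
Context (B : SkewBicatData) (HB : is_bicat B) (W : WarpData B)
  (HT : T_functor W) (Hv : v_natural W) (Hk : k_natural W)
  (Hinv : components_invertible W) (H1 : axW1 W) (H2 : axW2 W).

Lemma idl {X Y} {f g : hom B X Y} (a : cell f g) : id2 g ∘ a = a.
Proof. apply HB. Qed.
Lemma idr {X Y} {f g : hom B X Y} (a : cell f g) : a ∘ id2 f = a.
Proof. apply HB. Qed.
Lemma assoc {X Y} {f g h i : hom B X Y} (a : cell f g) (b : cell g h) (c : cell h i) :
  c ∘ (b ∘ a) = c ∘ b ∘ a.
Proof. apply HB. Qed.
Lemma hid {X Y Z} (g : hom B Y Z) (f : hom B X Y) : id2 g ⋆ id2 f = id2 (g · f).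
Proof. apply HB. Qed.
Lemma hcv {X Y Z} {g g' g'' : hom B Y Z} {f f' f'' : hom B X Y}
     (t : cell g g') (t' : cell g' g'') (p : cell f f') (p' : cell f' f'') :
      (t' ∘ t) ⋆ (p' ∘ p) = (t' ⋆ p') ∘ (t ⋆ p).
Proof. apply HB. Qed.

Lemma lift2 {X Y} {f g h i : hom B X Y} (x : cell g h) (y : cell f g) (r : cell f h) :
  x ∘ y = r -> forall (z : cell h i), z ∘ x ∘ y = z ∘ r.
Proof. intros E z. by rewrite -assoc E. Qed.
Lemma lift3 {X Y} {f g h i j : hom B X Y} (x : cell h i) (y : cell g h) (w : cell f g) (r : cell f i) :
  x ∘ y ∘ w = r -> forall (z : cell i j), z ∘ x ∘ y ∘ w = z ∘ r.
Proof. intros E z. by rewrite -E !assoc. Qed.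
Lemma lift4 {X Y} {f g h i j l : hom B X Y} (x : cell i j) (x' : cell h i) (y : cell g h) (w : cell f g) (r : cell f j) :
  x ∘ x' ∘ y ∘ w = r -> forall (z : cell j l), z ∘ x ∘ x' ∘ y ∘ w = z ∘ r.
Proof. intros E z. by rewrite -E !assoc. Qed.

Lemma inv_l {X Y} {f g h : hom B X Y} (c : cell g h) (x y : cell f g) :
  invertible c -> c ∘ x = c ∘ y -> x = y.
Proof. intros [c' [E1 E2]] E. by rewrite -(idl x) -(idl y) -E1 -!assoc E. Qed.
Lemma inv_r {X Y} {f g h : hom B X Y} (c : cell f g) (x y : cell g h) :
  invertible c -> x ∘ c = y ∘ c -> x = y.
Proof. intros [c' [E1 E2]] E. by rewrite -(idr x) -(idr y) -E2 !assoc E. Qed.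
Lemma inv_comp {X Y} {f g h : hom B X Y} (a : cell f g) (b : cell g h) :
  invertible a -> invertible b -> invertible (b ∘ a).
Proof.
  intros [a' [A1 A2]] [b' [B1 B2]]. exists (a' ∘ b'). split.
  - by rewrite !assoc (lift2 _ _ _ B1) idr A1.
  - by rewrite !assoc (lift2 _ _ _ A2) idr B2.
Qed.
Lemma inv_h {X Y Z} {g g' : hom B Y Z} {f f' : hom B X Y} (a : cell g g') (b : cell f f') :
  invertible a -> invertible b -> invertible (a ⋆ b).
Proof.
  intros [a' [A1 A2]] [b' [B1 B2]]. exists (a' ⋆ b'). split.
  - by rewrite -hcv A1 B1 hid.
  - by rewrite -hcv A2 B2 hid.
Qed.
Lemma inv_id {X Y} (f : hom B X Y) : invertible (id2 f).
Proof. exists (id2 f). by rewrite idl. Qed.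
Lemma inv_T {X Y} {f f' : hom B X (D W Y)} (a : cell f f') : invertible a -> invertible (T2 W a).
Proof.
  intros [a' [A1 A2]]. exists (T2 W a'). destruct HT as [T1 T2'].
  by rewrite -!T2' A1 A2 !T1.
Qed.
Lemma alpha_nat {V X Y Z} {f f' : hom B V X} {g g' : hom B X Y} {h h' : hom B Y Z}
     (a : cell f f') (b : cell g g') (c : cell h h') :
      alpha f' g' h' ∘ ((c ⋆ b) ⋆ a) = (c ⋆ (b ⋆ a)) ∘ alpha f g h.
Proof. apply HB. Qed.
Lemma lam_nat {X Y} {f f' : hom B X Y} (a : cell f f') :
      lambda f' ∘ (id2 (id1 Y) ⋆ a) = a ∘ lambda f.
Proof. apply HB. Qed.
Lemma rho_nat {X Y} {f f' : hom B X Y} (a : cell f f') :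
      rho f' ∘ a = (a ⋆ id2 (id1 X)) ∘ rho f.
Proof. apply HB. Qed.
Lemma B2 {X Y Z} (f : hom B X Y) (g : hom B Y Z) :
    (id2 g ⋆ lambda f) ∘ alpha f (id1 Y) g ∘ (rho g ⋆ id2 f) = id2 (g · f).
Proof. apply HB. Qed.
Lemma B4 {X Y Z} (f : hom B X Y) (g : hom B Y Z) :
    alpha (id1 X) f g ∘ rho (g · f) = id2 g ⋆ rho f.
Proof. apply HB. Qed.
Lemma B5 (X : ob B) : lambda (id1 X) ∘ rho (id1 X) = id2 (id1 X).
Proof. apply HB. Qed.
Lemma inv_alpha {V X Y Z} (f : hom B V X) (g : hom B X Y) (h : hom B Y Z) : invertible (alpha f g h).
Proof. apply HB. Qed.
Lemma inv_lam {X Y} (f : hom B X Y) : invertible (lambda f).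
Proof. apply HB. Qed.
Lemma inv_rho {X Y} (f : hom B X Y) : invertible (rho f).
Proof. apply HB. Qed.
Lemma inv_v {X Y Z} (g : hom B Y (D W Z)) (f : hom B X (D W Y)) : invertible (v W g f).
Proof. apply Hinv. Qed.
Lemma inv_k {X Y} (f : hom B X (D W Y)) : invertible (k W f).
Proof. apply Hinv. Qed.
Lemma inv_v0 Y : invertible (v0 W Y).
Proof. apply Hinv. Qed.
Lemma Tid {X Y} (f : hom B X (D W Y)) : T2 W (id2 f) = id2 (T W f).
Proof. apply HT. Qed.
Lemma Tc {X Y} {f f' f'' : hom B X (D W Y)} (a : cell f f') (b : cell f' f'') :
      T2 W (b ∘ a) = T2 W b ∘ T2 W a.
Proof. apply HT. Qed.
Lemma vnat {X Y Z} {g g' : hom B Y (D W Z)} {f f' : hom B X (D W Y)} (b : cell g g') (a : cell f f') :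
    v W g' f' ∘ T2 W (T2 W b ⋆ a) = (T2 W b ⋆ T2 W a) ∘ v W g f.
Proof. apply Hv. Qed.
Lemma knat {X Y} {f f' : hom B X (D W Y)} (a : cell f f') :
    k W f' ∘ a = (T2 W a ⋆ id2 (K W X)) ∘ k W f.
Proof. apply Hk. Qed.
Lemma W1 {X Y Z V} (f : hom B X (D W Y)) (g : hom B Y (D W Z)) (h : hom B Z (D W V)) :
    alpha (T W f) (T W g) (T W h) ∘ (v W h g ⋆ id2 (T W f)) ∘ v W (T W h · g) f
    = (id2 (T W h) ⋆ v W g f) ∘ v W h (T W g · f) ∘ T2 W (alpha f (T W g) (T W h)) ∘ T2 W (v W h g ⋆ id2 f).
Proof. apply H1. Qed.
Lemma W2 {X Y} (f : hom B X (D W Y)) :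
    (id2 (T W f) ⋆ v0 W X) ∘ v W f (K W X) ∘ T2 W (k W f) = rho (T W f).
Proof. apply H2. Qed.

Lemma xch1 {X Y Z} {g g' : hom B Y Z} {f f' : hom B X Y} (t : cell g g') (p : cell f f') :
  (t ⋆ id2 f') ∘ (id2 g ⋆ p) = t ⋆ p.
Proof. by rewrite -hcv idl idr. Qed.
Lemma xch2 {X Y Z} {g g' : hom B Y Z} {f f' : hom B X Y} (t : cell g g') (p : cell f f') :
  (id2 g' ⋆ p) ∘ (t ⋆ id2 f) = t ⋆ p.
Proof. by rewrite -hcv idl idr. Qed.
Lemma wr {X Y Z} {g g' g'' : hom B Y Z} (f : hom B X Y) (t : cell g g') (t' : cell g' g'') :
  (t' ⋆ id2 f) ∘ (t ⋆ id2 f) = (t' ∘ t) ⋆ id2 f.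
Proof. by rewrite -hcv idl. Qed.
Lemma wl {X Y Z} (g : hom B Y Z) {f f' f'' : hom B X Y} (t : cell f f') (t' : cell f' f'') :
  (id2 g ⋆ t') ∘ (id2 g ⋆ t) = id2 g ⋆ (t' ∘ t).
Proof. by rewrite -hcv idl. Qed.

Lemma faithful {X Y} {f f' : hom B X (D W Y)} (a b : cell f f') : T2 W a = T2 W b -> a = b.
Proof.
  intro E. apply (inv_l (k W f')); first apply inv_k.
  by rewrite !knat E.
Qed.

Lemma L2 {X Y Z} (f : hom B X Y) (g : hom B Y Z) (m : hom B Y Y) (u : cell m (id1 Y))
  (P : cell g (g · m)) : (id2 g ⋆ u) ∘ P = rho g ->
  (id2 g ⋆ (lambda f ∘ (u ⋆ id2 f))) ∘ alpha f m g ∘ (P ⋆ id2 f) = id2 (g · f).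
Proof.
  intro E. rewrite -wl (lift2 _ _ _ (eq_sym (alpha_nat (id2 f) u (id2 g)))).
  by rewrite -!assoc wr E !assoc B2.
Qed.
Lemma W3h {X Y V} (f : hom B X (D W Y)) (h : hom B Y (D W V)) :
  id2 (T W h) ⋆ (lambda (T W f) ∘ (v0 W Y ⋆ id2 (T W f)) ∘ v W (K W Y) f)
  = id2 (T W h) ⋆ (T2 W (lambda f) ∘ T2 W (v0 W Y ⋆ id2 f)).
Proof.
  have EP : (id2 (T W h) ⋆ v0 W Y) ∘ (v W h (K W Y) ∘ T2 W (k W h)) = rho (T W h)
    by rewrite assoc W2.
  have QI : invertible (v W h (T W (K W Y) · f) ∘ T2 W (alpha f (T W (K W Y)) (T W h)
              ∘ ((v W h (K W Y) ∘ T2 W (k W h)) ⋆ id2 f))).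
  { apply inv_comp; first apply inv_T; [apply inv_comp|apply inv_v].
    - apply inv_h; [apply inv_comp; [apply inv_T, inv_k | apply inv_v] | apply inv_id].
    - apply inv_alpha. }
  apply (inv_r _ _ _ QI).
  transitivity (v W h f).
  - rewrite -wl Tc -wr Tc !assoc.
    rewrite (lift4 _ _ _ _ _ (eq_sym (W1 f (K W Y) h))) !assoc.
    rewrite (lift2 _ _ _ (vnat (k W h) (id2 f))) Tid !assoc.
    rewrite (lift2 _ _ _ (wr _ _ _)).
    by rewrite (L2 _ _ _ _ _ EP) idl.
  - rewrite -Tc -(Tid h) assoc -(vnat (id2 h) (lambda f ∘ v0 W Y ⋆ id2 f)) Tid.
    rewrite -assoc -Tc !assoc (L2 _ _ _ _ _ EP) Tid idr //.
Qed.
Lemma W3 : axW3 W.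
Proof.
  intros X Y f. rewrite /rwhisk.
  have E := W3h f (K W Y).
  apply (inv_r (lambda _)); first apply inv_lam.
  rewrite -!lam_nat. f_equal.
  apply (inv_r (v0 W Y ⋆ id2 (T W (T W (K W Y) · f)))).
  { apply inv_h; [apply inv_v0 | apply inv_id]. }
  rewrite !xch2 -(xch1 (v0 W Y) (lambda (T W f) ∘ v0 W Y ⋆ id2 (T W f) ∘ v W (K W Y) f)).
  by rewrite E xch1.
Qed.
Lemma W4 : axW4 W.
Proof.
  intros X Y Z f g. rewrite /rwhisk /lwhisk.
  apply faithful. rewrite !Tc.
  apply (inv_l ((id2 (T W g) ⋆ ((id2 (T W f) ⋆ v0 W X) ∘ v W f (K W X))) ∘ v W g (T W f · K W X))).
  { apply inv_comp; [apply inv_v|]. apply inv_h; [apply inv_id|].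
    apply inv_comp; [apply inv_v | apply inv_h; [apply inv_id|apply inv_v0]]. }
  transitivity ((id2 (T W g) ⋆ rho (T W f)) ∘ v W g f).
  - rewrite -wl !assoc (lift4 _ _ _ _ _ (eq_sym (W1 (K W X) f g))) !assoc.
    rewrite -(alpha_nat (v0 W X) (id2 (T W f)) (id2 (T W g))) hid.
    rewrite (lift2 _ _ _ (xch2 _ _)) -(xch1 (v W g f) (v0 W X)) !assoc.
    rewrite (lift3 _ _ _ _ (W2 _)) (lift2 _ _ _ (eq_sym (rho_nat (v W g f)))) !assoc.
    by rewrite B4.
  - rewrite -(Tid g) -assoc (vnat (id2 g) (k W f)) !Tid !assoc wl.
    by rewrite W2.
Qed.
Lemma W5 : axW5 W.
Proof.
  intros X. rewrite /rwhisk.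
  apply faithful. rewrite !Tc Tid.
  have E := W3 X X (K W X). rewrite /rwhisk in E. rewrite -E.
  apply (inv_l (v0 W X)); first apply inv_v0.
  rewrite idr !assoc -(lam_nat (v0 W X)).
  rewrite (lift2 _ _ _ (xch2 _ _)) -(xch1 (v0 W X) (v0 W X)) !assoc.
  rewrite (lift3 _ _ _ _ (W2 _)) (lift2 _ _ _ (eq_sym (rho_nat (v0 W X)))) !assoc.
  by rewrite B5 idl.
Qed.
End Main.

Theorem mainTheorem1 (B : SkewBicatData) (HB : is_bicat B) (W : WarpData B)
  (HT : T_functor W) (Hv : v_natural W) (Hk : k_natural W)
  (Hinv : components_invertible W) (H1 : axW1 W) (H2 : axW2 W) :
  axW3 W /\ axW4 W /\ axW5 W.
Proof.
  split; [|split].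
  - eapply W3; eassumption.
  - eapply W4; eassumption.
  - eapply W5; eassumption.
Qed.
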